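(* Let $b,q,\lambda^i,\mu^i,\gamma^i$ ($i=1,\dots,n$) be smooth functions of $R^1,\dots,R^n$ with all $\mu^i$ nowhere zero, such that $q_i=\frac{\lambda^i}{\mu^i}b_i$ for all $i$ and, for all $i\ne j$, with $E_{ij}:=q(\mu^j-\mu^i)+b(\lambda^i-\lambda^j)+\gamma^i-\gamma^j$ nowhere zero and $K_{ij}:=\frac{\lambda^i-\lambda^j\mu^i/\mu^j}{E_{ij}}b_j$, $$\lambda^i_j=(\lambda^j-\lambda^i)K_{ij},\quad \mu^i_j=(\mu^j-\mu^i)K_{ij},\quad \gamma^i_j=(\gamma^j-\gamma^i)K_{ij},\quad b_{ij}=\frac{\lambda^i(1+\mu^j/\mu^i)-\lambda^j(1+\mu^i/\mu^j)}{E_{ij}}b_ib_j.$$ Then the functions $c^i:=\gamma^i+b\lambda^i-q\mu^i$ satisfy $\partial c^i/\partial R^j=0$ for $j\ne i$ and $E_{ij}=c^i-c^j$; locally there is a function $u$ with $u_i=\mu^ib_i$; and with $\phi^i:=\lambda^i/\mu^i$ one has, for all $i\ne j$, $$\phi^i_j=\frac{(\phi^j-\phi^i)^2}{c^j-c^i}u_j,\qquad u_{ij}=2\frac{\phi^j-\phi^i}{c^j-c^i}u_iu_j.$$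
   Context: Lower indices denote partial derivatives with respect to $R^1,\dots,R^n$. (This is the Gibbons-Tsarev system for hydrodynamic reductions of $\theta_{t\tilde t}+\theta_{z\tilde z}+\theta_{tx}\theta_{zy}-\theta_{ty}\theta_{zx}=0$ with $b=\theta_{zy}$, $q=\theta_{zx}$.) *)

(* Defs.v *)
(* Functions of (R^1,...,R^n) are modelled as
   total functions 'rV[R]_n -> R; hypotheses are imposed on an open set U. *)
From HB Require Import structures.
From mathcomp Require Import all_boot all_order all_algebra.
From mathcomp Require Import all_classical all_reals all_analysis.
Set Implicit Arguments. Unset Strict Implicit. Unset Printing Implicit Defensive.
Import Order.TTheory GRing.Theory Num.Theory.
Import numFieldNormedType.Exports.
Local Open Scope classical_set_scope.
Local Open Scope ring_scope.

Definition partial {R : realType} {n : nat} (f : 'rV[R]_n -> R) (i : 'I_n)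
  : 'rV[R]_n -> R := fun x => 'D_(delta_mx 0 i) f x.

Fixpoint iter_partial {R : realType} {n : nat} (l : seq 'I_n)
  (f : 'rV[R]_n -> R) : 'rV[R]_n -> R :=
  match l with
  | [::] => f
  | i :: l' => partial (iter_partial l' f) i
  end.

Definition smooth_on {R : realType} {n : nat} (U : set 'rV[R]_n)
  (f : 'rV[R]_n -> R) : Prop :=
  forall (l : seq 'I_n) (x : 'rV[R]_n), U x -> differentiable (iter_partial l f) x.

(* Main.v *)
Require Import Defs.
From HB Require Import structures.
From mathcomp Require Import all_boot all_order all_algebra.
From mathcomp Require Import all_classical all_reals all_analysis.
From mathcomp Require Import ring.
Set Implicit Arguments. Unset Strict Implicit. Unset Printing Implicit Defensive.
Import Order.TTheory GRing.Theory Num.Theory.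
Import numFieldNormedType.Exports.
Local Open Scope classical_set_scope.
Local Open Scope ring_scope.


Section Alg.
Context {R : realType} {V : normedModType R}.
Implicit Types (f g : V -> R).
Lemma derivableMp f g x v : derivable f x v -> derivable g x v -> derivable (fun y => f y * g y) x v.
Proof. exact: derivableM. Qed.
Lemma derivableDp f g x v : derivable f x v -> derivable g x v -> derivable (fun y => f y + g y) x v.
Proof. exact: derivableD. Qed.
Lemma derivableBp f g x v : derivable f x v -> derivable g x v -> derivable (fun y => f y - g y) x v.
Proof. exact: derivableB. Qed.
Lemma deriveMp f g x v : derivable f x v -> derivable g x v ->
  'D_v (fun y => f y * g y) x = f x * 'D_v g x + g x * 'D_v f x.
Proof. exact: deriveM. Qed.
Lemma deriveDp f g x v : derivable f x v -> derivable g x v ->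
  'D_v (fun y => f y + g y) x = 'D_v f x + 'D_v g x.
Proof. exact: deriveD. Qed.
Lemma deriveBp f g x v : derivable f x v -> derivable g x v ->
  'D_v (fun y => f y - g y) x = 'D_v f x - 'D_v g x.
Proof. exact: deriveB. Qed.
Lemma derivableVp f x v : f x != 0 -> derivable f x v -> derivable (fun y => (f y)^-1) x v.
Proof. exact: derivableV. Qed.
Lemma deriveVp f x v : f x != 0 -> derivable f x v ->
  'D_v (fun y => (f y)^-1) x = - (f x) ^- 2 * 'D_v f x.
Proof. exact: deriveV. Qed.
Lemma derive_c (f g h k l : V -> R) x v : derivable f x v -> derivable g x v -> derivable h x v ->
  derivable k x v -> derivable l x v ->
  'D_v (fun y => f y + g y * h y - k y * l y) x =
  'D_v f x + (g x * 'D_v h x + h x * 'D_v g x) - (k x * 'D_v l x + l x * 'D_v k x).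
Proof.
move=> df dg dh dk dl.
rewrite (deriveBp (derivableDp df (derivableMp dg dh)) (derivableMp dk dl)).
rewrite (deriveDp df (derivableMp dg dh)).
by rewrite (deriveMp dg dh) (deriveMp dk dl).
Qed.
Lemma derive_div f g x v : g x != 0 -> derivable f x v -> derivable g x v ->
  'D_v (fun y => f y / g y) x = f x * (- (g x) ^- 2 * 'D_v g x) + (g x)^-1 * 'D_v f x.
Proof.
move=> g0 df dg.
by rewrite (deriveMp df (derivableVp g0 dg)) (deriveVp g0 dg).
Qed.
End Alg.


Section Gen.
Context {R : realType} {V W : normedModType R}.

Lemma diff_of (f : V -> W) x (df : {linear V -> W}) : continuous df ->
  (forall eps, 0 < eps -> \forall h \near 0, `|f (h + x) - f x - df h| <= eps * `|h|) ->
  differentiable f x.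
Proof.
move=> dfc H.
have E : f \o shift x = cst (f x) + df +o_ 0 id.
  apply/eqaddoP => eps ep; have := H eps ep; apply: filterS => h /=.
  by rewrite !fctE opprD addrA.
by apply/diff_locallyP; rewrite (diff_unique dfc E); split.
Qed.

Lemma diff_bound (f : V -> W) x : differentiable f x ->
  (forall eps, 0 < eps -> \forall h \near 0, `|f (h + x) - f x - 'd f x h| <= eps * `|h|).
Proof.
move=> /diff_locally /eqaddoP H eps ep; have := H eps ep; apply: filterS => h /=.
by rewrite !fctE opprD addrA.
Qed.

Lemma near_eq_differentiable (f g : V -> W) x :
  (\near x, f x = g x) -> differentiable f x -> differentiable g x.
Proof.
move=> fg df.
apply: (@diff_of _ _ ('d f x)); first exact: diff_continuous.
move=> eps ep.
have := diff_bound df ep.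
have : \forall h \near (0:V), f (h + x) = g (h + x).
  by rewrite (near_shift x); apply: filterS fg => y /=; rewrite sub0r subrK.
apply: filter_app2; apply: nearW => h -> .
by rewrite (nbhs_singleton fg).
Qed.

Lemma open_near (U : set V) x : open U -> U x -> \forall y \near x, U y.
Proof. by move=> oU Ux; apply: open_nbhs_nbhs. Qed.

End Gen.

Section Part.
Context {R : realType} {n : nat}.
Implicit Types (U : set 'rV[R]_n) (f g : 'rV[R]_n -> R).

Lemma iter_partial_cat (l1 l2 : seq 'I_n) f :
  iter_partial l1 (iter_partial l2 f) = iter_partial (l1 ++ l2) f.
Proof. by elim: l1 => //= i l ->. Qed.

Lemma iter_partial_loc U f g l : open U -> (forall y, U y -> f y = g y) ->
  forall y, U y -> iter_partial l f y = iter_partial l g y.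
Proof.
move=> oU fg; elim: l => [|i l IH] y Uy /=; first exact: fg.
rewrite /partial; apply: near_eq_derive.
by apply: filterS (open_near oU Uy) => z Uz; exact: IH.
Qed.

Lemma smooth_diff U f x : smooth_on U f -> U x -> differentiable f x.
Proof. by move=> sf Ux; exact: (sf [::]). Qed.

Lemma smooth_partial U f i : smooth_on U f -> smooth_on U (partial f i).
Proof.
move=> sf l x Ux.
have -> : iter_partial l (partial f i) = iter_partial (l ++ [:: i]) f.
  by rewrite -iter_partial_cat.
exact: sf.
Qed.

Lemma smooth_near U V f : open V -> V `<=` U -> smooth_on U f -> smooth_on V f.
Proof. by move=> _ VU sf l x Vx; apply: sf; apply: VU. Qed.

Definition Dk m U F := forall l : seq 'I_n, (size l <= m)%N ->
  forall y, U y -> differentiable (iter_partial l F) y.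

Lemma Dk_sum m U F G : open U -> Dk m U F -> Dk m U G ->
  forall l : seq 'I_n, (size l <= m)%N ->
  forall y, U y -> iter_partial l (F + G) y = iter_partial l F y + iter_partial l G y.
Proof.
move=> oU dF dG; elim=> [|i l IH] sl y Uy //=.
have sl' : (size l <= m)%N by apply: leq_trans sl; rewrite /= leqnSn.
rewrite /partial -deriveD; last 2 first.
- by apply: diff_derivable; apply: dF.
- by apply: diff_derivable; apply: dG.
apply: near_eq_derive; apply: filterS (open_near oU Uy) => z Uz.
by rewrite IH.
Qed.

Lemma Dk_add m U F G : open U -> Dk m U F -> Dk m U G -> Dk m U (F + G).
Proof.
move=> oU dF dG l sl y Uy.
apply: (@near_eq_differentiable _ _ _ (iter_partial l F + iter_partial l G)).
  apply: filterS (open_near oU Uy) => z Uz.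
  by rewrite (Dk_sum oU dF dG sl Uz).
by apply: differentiableD; [apply: dF|apply: dG].
Qed.

Lemma smooth_Dk U f m : smooth_on U f -> Dk m U f.
Proof. by move=> sf l _ y Uy; apply: sf. Qed.

Lemma Dk_smooth U f : (forall m, Dk m U f) -> smooth_on U f.
Proof. by move=> H l y Uy; apply: (H (size l)). Qed.

Lemma smooth_mul_Dk U m : open U -> forall f g, smooth_on U f -> smooth_on U g ->
  Dk m U (f * g).
Proof.
move=> oU; elim: m => [|m IH] f g sf sg l sl y Uy.
  move: sl; rewrite leqn0 => /nilP -> /=.
  by apply: differentiableM; [apply: smooth_diff sf Uy|apply: smooth_diff sg Uy].
case/lastP: l sl => [|l i] sl.
  by apply: differentiableM; [apply: smooth_diff sf Uy|apply: smooth_diff sg Uy].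
rewrite size_rcons ltnS in sl.
have -> : iter_partial (rcons l i) (f * g) = iter_partial l (partial (f * g) i).
  by rewrite -cats1 -iter_partial_cat.
have E : forall z, U z -> partial (f * g) i z = (f * partial g i + g * partial f i) z.
  move=> z Uz; rewrite /partial deriveM; last 2 first.
  - by apply: diff_derivable; apply: smooth_diff sf Uz.
  - by apply: diff_derivable; apply: smooth_diff sg Uz.
  by rewrite !fctE.
have D : Dk m U (f * partial g i + g * partial f i).
  apply: Dk_add => //; apply: IH => //; exact: smooth_partial.
apply: (@near_eq_differentiable _ _ _ (iter_partial l (f * partial g i + g * partial f i))).
  apply: filterS (open_near oU Uy) => z Uz.
  by rewrite (iter_partial_loc l oU E Uz).
exact: D.
Qed.

Lemma smooth_mul U f g : open U -> smooth_on U f -> smooth_on U g -> smooth_on U (f * g).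
Proof. by move=> oU sf sg; apply: Dk_smooth => m; apply: smooth_mul_Dk. Qed.

Lemma smooth_on_loc U V f g : open V -> V `<=` U -> smooth_on U f ->
  (forall y, V y -> f y = g y) -> smooth_on V g.
Proof.
move=> oV VU sf fg l y Vy.
apply: (@near_eq_differentiable _ _ _ (iter_partial l f)).
  apply: filterS (open_near oV Vy) => z Vz.
  by rewrite (iter_partial_loc l oV fg Vz).
by apply: sf; apply: VU.
Qed.

End Part.


Section Norms.
Context {R : realType} {m n : nat}.
Lemma entry_le_norm (M : 'M[R]_(m, n)) i j : `|M i j| <= `|M|.
Proof.
rewrite [leRHS]/Num.norm /= mx_normrE; apply/bigmax_geP; right => /=.
by exists (i, j).
Qed.
Lemma norm_le_entries (M : 'M[R]_(m, n)) r : 0 <= r ->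
  (forall i j, `|M i j| <= r) -> `|M| <= r.
Proof.
move=> r0 H; rewrite [leLHS]/Num.norm /= mx_normrE; apply: bigmax_le => //.
Qed.
End Norms.

Section Line.
Context {R : realType} {V W : normedModType R}.
Lemma line_eq (f : V -> W) (a v : V) (s : R) :
  (fun h : R => h^-1 *: (((fun t : R => f (t *: v + a)) \o shift s) (h *: 1) - f (s *: v + a)))
  = (fun h : R => h^-1 *: ((f \o shift (s *: v + a)) (h *: v) - f (s *: v + a))).
Proof.
apply/funext => h /=; congr (_ *: (f _ - _)).
by rewrite scalerDl addrA [h%:A]mulr1.
Qed.
Lemma line_derivable (f : V -> W) (a v : V) (s : R) :
  derivable (fun t : R => f (t *: v + a)) s 1 <-> derivable f (s *: v + a) v.
Proof. by rewrite /derivable line_eq. Qed.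
Lemma line_derive (f : V -> W) (a v : V) (s : R) :
  'D_1 (fun t : R => f (t *: v + a)) s = 'D_v f (s *: v + a).
Proof. by rewrite /derive line_eq. Qed.
End Line.

Section MVTline.
Context {R : realType} {V : normedModType R}.
Lemma mvt_line (f : V -> R) (S : set V) (z v : V) (t : R) :
  (forall s, `|s| <= `|t| -> S (s *: v + z)) -> (forall p, S p -> derivable f p v) ->
  exists c, `|c| <= `|t| /\ f (t *: v + z) - f z = t * 'D_v f (c *: v + z).
Proof.
move=> Sl df.
pose phi := fun s : R => f (s *: v + z).
have dphi s : `|s| <= `|t| -> derivable phi s 1.
  by move=> st; apply/line_derivable; apply: df; apply: Sl.
have isd (s : R) : `|s| <= `|t| -> is_derive s 1 phi ('D_v f (s *: v + z)).
  by move=> st; apply: DeriveDef; [exact: dphi|rewrite /phi line_derive].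
have [t0|t0] := leP 0 t.
  have [c /[dup] cI + E] : exists2 c, c \in `[0, t] & phi t - phi 0 = 'D_v f (c *: v + z) * (t - 0).
    apply: MVT_segment => //.
      move=> x /[!in_itv] /= /andP[x0 xt]; apply: isd.
      by rewrite !ger0_norm // ?ltW // (le_trans (ltW x0)) // ltW.
    apply: derivable_within_continuous => x /[!in_itv] /= /andP[x0 xt]; apply: dphi.
    by rewrite !ger0_norm // (le_trans x0).
  rewrite in_itv /= => /andP[c0 ct].
  exists c; split; first by rewrite !ger0_norm // (le_trans c0).
  by move: E; rewrite /phi scale0r add0r subr0 mulrC.
have [c /[dup] cI + E] : exists2 c, c \in `[t, 0] & phi 0 - phi t = 'D_v f (c *: v + z) * (0 - t).
  apply: MVT_segment; first exact: ltW.
    move=> x /[!in_itv] /= /andP[tx x0]; apply: isd.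
    by rewrite !ltr0_norm // ?lerN2 ?ltW // (lt_trans tx).
  apply: derivable_within_continuous => x /[!in_itv] /= /andP[tx x0]; apply: dphi.
  have [x0'|x0'] := leP 0 x.
    by rewrite (ger0_norm x0') ltr0_norm // (le_trans x0) // -lerN2 opprK oppr0 ltW.
  by rewrite !ltr0_norm // lerN2.
rewrite in_itv /= => /andP[tc c0].
exists c; split.
  have [c0'|c0'] := leP 0 c.
    by rewrite (ger0_norm c0') ltr0_norm // (le_trans c0) // -lerN2 opprK oppr0 ltW.
  by rewrite !ltr0_norm // lerN2.
move: E; rewrite /phi scale0r add0r sub0r mulrN => /eqP; rewrite -opprB eqr_opp mulrC.
by move/eqP.
Qed.
End MVTline.

Section CPsec.
Context {R : realType} {n : nat}.

Definition linf (c : 'I_n -> R) (h : 'rV[R]_n) : R := \sum_k h 0 k * c k.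
Lemma linf_lin c : linear (linf c).
Proof.
move=> a x y; rewrite /linf scaler_sumr -big_split /=; apply: eq_bigr => k _.
by rewrite !mxE mulrDl -mulrA.
Qed.
HB.instance Definition _ c := GRing.isLinear.Build R 'rV[R]_n R *:%R (linf c) (linf_lin c).

Lemma linf_cont c : continuous (linf c).
Proof.
move=> h; apply: differentiable_continuous.
have -> : linf c = \sum_(k < n) (fun h : 'rV[R]_n => h 0 k * c k).
  by rewrite fct_sumE; apply/funext => z.
apply: differentiable_sum => k; apply: differentiableM => //.
exact: differentiable_coord.
Qed.

Definition zpt (h y : 'rV[R]_n) (k : nat) : 'rV[R]_n :=
  \row_m (if (m < k)%N then h 0 m else 0) + y.

Lemma zpt0 h y : zpt h y 0 = y.
Proof. by rewrite /zpt; apply/rowP => m; rewrite !mxE /= add0r. Qed.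
Lemma zptn h y : zpt h y n = h + y.
Proof. by rewrite /zpt; apply/rowP => m; rewrite !mxE ltn_ord. Qed.
Lemma zptS h y (k : 'I_n) : zpt h y k.+1 = h 0 k *: delta_mx 0 k + zpt h y k.
Proof.
rewrite /zpt; apply/rowP => m; rewrite !mxE /= addrA; congr (_ + _).
rewrite ltnS leq_eqVlt; case: (eqVneq (m : nat) k) => [mk|mk] /=.
  have -> : m = k by apply: val_inj.
  by rewrite eqxx ltnn mulr1 addr0.
have -> : (m == k) = false by apply/negP => /eqP mk'; move: mk; rewrite mk' eqxx.
by rewrite mulr0 add0r.
Qed.

Lemma zpt_bound (h : 'rV[R]_n) (k : 'I_n) (s : R) : `|s| <= `|h 0 k| ->
  `|s *: delta_mx 0 k + \row_m (if (m < k)%N then h 0 m else 0)| <= `|h|.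
Proof.
move=> sh; apply: norm_le_entries => // i m; rewrite !mxE [i]ord1 eqxx /=.
case: (eqVneq k m) => [<-|km]; first by rewrite ltnn mulr1 addr0 (le_trans sh) // entry_le_norm.
rewrite mulr0 add0r; case: ifP => _; first exact: entry_le_norm.
by rewrite normr0.
Qed.

Lemma CP (S : set 'rV[R]_n) (f : 'rV[R]_n -> R) y : open S -> S y ->
  (forall z k, S z -> derivable f z (delta_mx 0 k)) ->
  (forall k, {for y, continuous (fun z => 'D_(delta_mx 0 k) f z)}) ->
  differentiable f y.
Proof.
move=> oS Sy df cf.
pose c k := 'D_(delta_mx 0 k) f y.
apply: (@diff_of _ _ _ f y (linf c)); first exact: linf_cont.
move=> eps ep.
pose eps' := eps / (n%:R + 1).
have ep' : 0 < eps' by rewrite divr_gt0 // ltr_wpDl.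
have : \forall z \near y, S z /\ forall k, `|c k - 'D_(delta_mx 0 k) f z| < eps'.
  apply: filterI; first exact: (open_near oS Sy).
  apply: (@filter_forall _ _ _ (nbhs y)) => k; move/cvgrPdist_lt: (cf k); exact.
move=> /nbhs_ballP [d /= d0 Hd].
apply: filterS (nbhs0_lt d0) => h hd.
have key : forall k : 'I_n, `|f (zpt h y k.+1) - f (zpt h y k) - h 0 k * c k| <= `|h| * eps'.
  move=> k; rewrite zptS.
  have P1 : forall s, `|s| <= `|h 0 k| -> ball y d (s *: delta_mx 0 k + zpt h y k).
    move=> s sh; rewrite -ball_normE /= distrC /zpt addrA addrK.
    exact: le_lt_trans (zpt_bound sh) hd.
  have P2 : forall p, ball y d p -> derivable f p (delta_mx 0 k).
    by move=> p /Hd [Sp _]; apply: df.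
  have [s [sh ->]] := mvt_line P1 P2.
  rewrite -mulrBr normrM ler_pM //; first exact: entry_le_norm.
  by move: (P1 s sh) => /Hd [_ /(_ k) /ltW]; rewrite distrC.
have -> : f (h + y) - f y - linf c h =
    \sum_(k < n) (f (zpt h y k.+1) - f (zpt h y k) - h 0 k * c k).
  rewrite sumrB -(big_mkord xpredT (fun k => f (zpt h y k.+1) - f (zpt h y k))).
  by rewrite telescope_sumr // zpt0 zptn.
apply: le_trans (ler_norm_sum _ _ _) _.
apply: le_trans (ler_sum _ (fun k _ => key k)) _.
rewrite sumr_const card_ord -mulr_natr mulrC mulrA.
rewrite [n%:R * _]mulrC -mulrA [eps * _]mulrC ler_wpM2l //.
rewrite /eps' mulrA ler_pdivrMr ?ltr_wpDl // mulrDr mulr1 mulrC lerDl ltW //.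
Qed.

End CPsec.


Section Rad1.
Context {R : realType} {n : nat}.
Implicit Types (phi : 'rV[R]_n -> R) (a v p : 'rV[R]_n).

Lemma dir_sum phi p v : differentiable phi p ->
  'D_v phi p = \sum_k v 0 k * 'D_(delta_mx 0 k) phi p.
Proof.
move=> dp; rewrite deriveE //.
under eq_bigr do rewrite deriveE //.
by rewrite {1}(row_sum_delta v) linear_sum; apply: eq_bigr => k _; rewrite linearZ.
Qed.

Lemma deriveZv phi p (c : R) v : differentiable phi p ->
  'D_(c *: v) phi p = c * 'D_v phi p.
Proof. by move=> dp; rewrite !deriveE // linearZ. Qed.

Lemma line_diff phi v a (t : R) : differentiable phi (t *: v + a) ->
  derivable (fun t : R => phi (t *: v + a)) t 1.
Proof. by move=> d; apply/line_derivable; exact: diff_derivable. Qed.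

Lemma affine_eq phi (c : R) a v p :
  (fun h : R => h^-1 *: (((fun q => phi (c *: (q - a) + a)) \o shift p) (h *: v)
     - phi (c *: (p - a) + a)))
  = (fun h : R => h^-1 *: ((phi \o shift (c *: (p - a) + a)) (h *: (c *: v))
     - phi (c *: (p - a) + a))).
Proof.
apply/funext => h /=; congr (_ *: (phi _ - _)).
by rewrite -addrA scalerDr scalerA mulrC -scalerA -addrA.
Qed.

Lemma derive_affine phi (c : R) a v p :
  'D_v (fun q => phi (c *: (q - a) + a)) p = 'D_(c *: v) phi (c *: (p - a) + a).
Proof. by rewrite /derive affine_eq. Qed.

Lemma derivable_affine phi (c : R) a v p :
  derivable (fun q => phi (c *: (q - a) + a)) p v <-> derivable phi (c *: (p - a) + a) (c *: v).
Proof. by rewrite /derivable affine_eq. Qed.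

Lemma diff_affine phi (c : R) a p : differentiable phi (c *: (p - a) + a) ->
  differentiable (fun q => phi (c *: (q - a) + a)) p.
Proof.
move=> d.
have -> : (fun q => phi (c *: (q - a) + a)) = phi \o (fun q => c *: (q - a) + a) by [].
apply: differentiable_comp => //.

Qed.

Lemma coord_derivable a v p k : derivable (fun q : 'rV[R]_n => (q - a) 0 k) p v.
Proof.
have : derivable (fun q : 'rV[R]_n => q - a) p v.
  by apply: derivableB; [exact: derivable_id|exact: derivable_cst].
by move/derivable_mxP; apply.
Qed.

Lemma coord_derive a v p k : 'D_v (fun q : 'rV[R]_n => (q - a) 0 k) p = v 0 k.
Proof.
have D : derivable (fun q : 'rV[R]_n => q - a) p v.
  by apply: derivableB; [exact: derivable_id|exact: derivable_cst].
have := derive_mx D; rewrite deriveB ?derive_id ?derive_cst ?subr0; last 2 first.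
  exact: derivable_id. exact: derivable_cst.
by move/matrixP => /(_ 0 k); rewrite mxE => ->.
Qed.

Lemma coord_diff a p k : differentiable (fun q : 'rV[R]_n => (q - a) 0 k) p.
Proof.
have -> : (fun q : 'rV[R]_n => (q - a) 0 k) = (fun N : 'rV[R]_n => N 0 k) \o (fun q => q - a) by [].
apply: differentiable_comp; first by apply: differentiableB.
exact: differentiable_coord.
Qed.

End Rad1.


Section Rad2.
Context {R : realType} {n : nat} (U : set 'rV[R]_n) (w : 'I_n -> 'rV[R]_n -> R)
  (x0 : 'rV[R]_n) (r : R).
Context (r0 : 0 < r) (Ub : ball x0 r `<=` U)
  (wd : forall k p, U p -> differentiable (w k) p).

Definition gt (t : R) (p : 'rV[R]_n) :=
  \sum_(k < n) (p - x0) 0 k * w k (t *: (p - x0) + x0).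

Lemma seg_in p t : ball x0 r p -> 0 <= t <= 1 -> ball x0 r (t *: (p - x0) + x0).
Proof.
move=> + /andP[t0 t1]; rewrite -!ball_normE /= => pr.
rewrite distrC addrK normrZ.
apply: le_lt_trans pr; rewrite distrC ger0_norm // ler_piMl //.
Qed.

Lemma gt_fun t : gt t = \sum_(k < n) (fun p => (p - x0) 0 k * w k (t *: (p - x0) + x0)).
Proof. by rewrite fct_sumE; apply/funext => p. Qed.

Lemma gt_term_diff t p k : 0 <= t <= 1 -> ball x0 r p ->
  differentiable (fun p => (p - x0) 0 k * w k (t *: (p - x0) + x0)) p.
Proof.
move=> t01 bp.
have -> : (fun p => (p - x0) 0 k * w k (t *: (p - x0) + x0)) =
  (fun p => (p - x0) 0 k) * (fun p => w k (t *: (p - x0) + x0)) by apply/funext.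
apply: differentiableM; first exact: coord_diff.
by apply: diff_affine; apply: wd; apply: Ub; apply: seg_in.
Qed.

Lemma gt_diff t p : 0 <= t <= 1 -> ball x0 r p -> differentiable (gt t) p.
Proof.
move=> t01 bp; rewrite gt_fun; apply: differentiable_sum => k.
exact: gt_term_diff.
Qed.

Lemma gt_derive t p v : 0 <= t <= 1 -> ball x0 r p ->
  'D_v (gt t) p = \sum_(k < n) ((p - x0) 0 k * (t * 'D_v (w k) (t *: (p - x0) + x0))
     + w k (t *: (p - x0) + x0) * v 0 k).
Proof.
move=> t01 bp; rewrite gt_fun derive_sum; last first.
  by move=> k; apply: diff_derivable; apply: gt_term_diff.
apply: eq_bigr => k _.
have dw : differentiable (w k) (t *: (p - x0) + x0) by apply: wd; apply: Ub; apply: seg_in.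
have -> : (fun p => (p - x0) 0 k * w k (t *: (p - x0) + x0)) =
  (fun p => (p - x0) 0 k) * (fun p => w k (t *: (p - x0) + x0)) by apply/funext.
rewrite deriveM; last 2 first.
- exact: coord_derivable.
- by apply: diff_derivable; apply: diff_affine.
by rewrite derive_affine deriveZv // coord_derive.
Qed.


Context (wpd : forall k j p, U p -> differentiable (partial (w k) j) p)
  (clo : forall j k p, U p -> partial (w k) j p = partial (w j) k p)
  (M1 : 'I_n -> R) (M2 : 'I_n -> 'I_n -> R)
  (b1 : forall k p, ball x0 r p -> `|w k p| <= M1 k)
  (b2 : forall k j p, ball x0 r p -> `|partial (w k) j p| <= M2 k j).

Local Notation mu := (@lebesgue_measure R).

Definition upot (p : 'rV[R]_n) := \int[mu]_(t in `[0, 1]) gt t p.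

Lemma gt_derivable_t p t : ball x0 r p -> 0 <= t <= 1 ->
  derivable (fun t => gt t p) t 1.
Proof.
move=> bp t01.
have -> : (fun t => gt t p) = \sum_(k < n) (fun t : R => (p - x0) 0 k * w k (t *: (p - x0) + x0)).
  by rewrite fct_sumE; apply/funext.
apply: derivable_sum => k.
have -> : (fun t : R => (p - x0) 0 k * w k (t *: (p - x0) + x0)) =
  (fun t : R => (p - x0) 0 k) * (fun t : R => w k (t *: (p - x0) + x0)) by apply/funext.
apply: derivableM; first exact: derivable_cst.
by apply: line_diff; apply: wd; apply: Ub; apply: seg_in.
Qed.

Lemma gt_int p : ball x0 r p -> mu.-integrable `[0, 1] (EFin \o (fun t => gt t p)).
Proof.
move=> bp; apply: continuous_compact_integrable; first exact: segment_compact.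
apply: derivable_within_continuous => t; rewrite in_itv /= => t01.
exact: gt_derivable_t.
Qed.


Lemma delta_entry_le1 (j k : 'I_n) : `|(delta_mx 0 j : 'rV[R]_n) 0 k| <= 1.
Proof. by rewrite mxE; case: (_ && _); rewrite ?normr1 ?normr0. Qed.

Lemma norm_delta_le1 (j : 'I_n) : `|(delta_mx 0 j : 'rV[R]_n)| <= 1.
Proof. by apply: norm_le_entries => // i k; rewrite [i]ord1; exact: delta_entry_le1. Qed.

Lemma upot_partial y j : ball x0 r y ->
  derivable upot y (delta_mx 0 j) /\ 'D_(delta_mx 0 j) upot y = w j y.
Proof.
move=> yb.
have [d d0 bd] : exists2 d, 0 < d & ball y d `<=` ball x0 r.
  have : nbhs y (ball x0 r) by apply: open_nbhs_nbhs; split; [exact: ball_open|exact: yb].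
  by move/nbhs_ballP => [d /= d0 H]; exists d.
pose ej := (delta_mx 0 j : 'rV[R]_n).
pose f := fun (s : R) (t : R) => gt t (s *: ej + y).
have hpt : forall s, `]-d, d[%classic s -> ball x0 r (s *: ej + y).
  move=> s; rewrite /= in_itv /= => sd; apply: bd.
  rewrite -ball_normE /= distrC addrK normrZ.
  apply: le_lt_trans (_ : `|s| * 1 < d).
    by rewrite ler_wpM2l // norm_delta_le1.
  by rewrite mulr1 ltr_norml.
have I0 : `]-d, d[%classic (0:R) by rewrite /= in_itv /= oppr_lt0 d0.
have intf : forall s, `]-d, d[%classic s -> mu.-integrable `[0, 1] (EFin \o f s).
  by move=> s hs; apply: gt_int; apply: hpt.
have derf1 : forall s t, `]-d, d[%classic s -> `[0, 1]%classic t -> derivable (f ^~ t) s 1.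
  move=> s t hs; rewrite /= in_itv /= => t01.
  by apply/line_derivable; apply: diff_derivable; apply: gt_diff => //; apply: hpt.
pose C := \sum_(k < n) (M1 k + r * M2 k j).
have M1ge0 k : 0 <= M1 k by apply: le_trans (normr_ge0 _) (b1 k (ballxx _ r0)).
have M2ge0 k : 0 <= M2 k j by apply: le_trans (normr_ge0 _) (b2 k j (ballxx _ r0)).
have G_ge0 : forall t : R, 0 <= cst C t.
  by move=> t; apply: sumr_ge0 => k _; apply: addr_ge0 => //; apply: mulr_ge0 => //; exact: ltW.
have intG : mu.-integrable `[0, 1] (EFin \o cst C).
  apply: continuous_compact_integrable; first exact: segment_compact.
  by apply: continuous_subspaceT; exact: cst_continuous.
have G_ub : forall s t, `]-d, d[%classic s -> `[0, 1]%classic t -> `|partial1of2 f s t| <= cst C t.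
  move=> s t hs; rewrite /= in_itv /= => /[dup] t01 /andP[t0 t1].
  rewrite partial1of2E line_derive gt_derive //; last exact: hpt.
  apply: le_trans (ler_norm_sum _ _ _) _; apply: ler_sum => k _.
  apply: le_trans (ler_normD _ _) _; rewrite addrC; apply: lerD.
    rewrite normrM; apply: le_trans (_ : `|w k (t *: (s *: ej + y - x0) + x0)| <= _).
      by rewrite ler_piMr // delta_entry_le1.
    by apply: b1; apply: seg_in => //; apply: hpt.
  rewrite normrM; apply: ler_pM => //.
    apply: le_trans (entry_le_norm _ _ _) _.
    by have := hpt s hs; rewrite -ball_normE /= distrC => /ltW.
  rewrite normrM; apply: le_trans (_ : `|partial (w k) j (t *: (s *: ej + y - x0) + x0)| <= _).
    by rewrite ler_piMl // ger0_norm.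
  by apply: b2; apply: seg_in => //; apply: hpt.
have D1 := @derivable_under_integral R _ _ mu f `[0, 1] ltac:(by []) 0 (-d) d I0 intf derf1 (cst C) G_ge0 intG G_ub.
have D2 := @differentiation_under_integral R _ _ mu f `[0, 1] ltac:(by []) 0 (-d) d I0 intf derf1 (cst C) G_ge0 intG G_ub.
have Fe : (fun x' => \int[mu]_(t in `[0, 1]) f x' t) = (fun s => upot (s *: ej + y)) by [].
rewrite Fe in D1 D2.
split.
  by move/line_derivable: D1; rewrite scale0r add0r.
have := line_derive upot y ej 0; rewrite scale0r add0r => <-.
rewrite -derive1E D2.
pose ga t := t *: (y - x0) + x0.
pose hder t := t * (\sum_(k < n) (y - x0) 0 k * partial (w j) k (ga t)) + w j (ga t).
rewrite (@eq_Rintegral _ _ _ mu _ hder); last first.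
  move=> t; rewrite inE /= in_itv /= => t01.
  rewrite partial1of2E line_derive scale0r add0r gt_derive // big_split /=.
  rewrite /hder; congr (_ + _).
    rewrite mulr_sumr; apply: eq_bigr => k _.
    rewrite mulrCA; congr (_ * _); congr (_ * _).
    by have := clo j k (Ub (seg_in yb t01)); rewrite /partial.
  rewrite (bigD1 j) //= big1 ?addr0.
    by rewrite /ej mxE !eqxx mulr1.
  by move=> k kj; rewrite /ej mxE eqxx /= (negPf kj) mulr0.
pose Hf t := t * w j (ga t).
have gaU t : 0 <= t <= 1 -> U (ga t) by move=> t01; apply: Ub; apply: seg_in.
have dwga t : 0 <= t <= 1 -> derivable (fun t => w j (ga t)) t 1.
  by move=> t01; apply: line_diff; apply: wd; apply: gaU.
have dHf t : 0 <= t <= 1 -> derivable Hf t 1.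
  move=> t01; have -> : Hf = id * (fun t => w j (ga t)) by apply/funext.
  by apply: derivableM; [exact: derivable_id|exact: dwga].
have Hf' t : 0 <= t <= 1 -> derive1 Hf t = hder t.
  move=> t01; rewrite derive1E.
  have -> : Hf = id * (fun t => w j (ga t)) by apply/funext.
  rewrite deriveM; [|exact: derivable_id|exact: dwga].
  rewrite derive_id line_derive (dir_sum _ (wd _ (gaU _ t01))) /hder /=.
  by rewrite /GRing.scale /= mulr1.
have dhder t : 0 <= t <= 1 -> derivable hder t 1.
  move=> t01.
  have -> : hder = id * \sum_(k < n) (fun t => (y - x0) 0 k * partial (w j) k (ga t))
                  + (fun t => w j (ga t)).
    by apply/funext => s; rewrite /hder !fctE fct_sumE.
  apply: derivableD; last exact: dwga.
  apply: derivableM; first exact: derivable_id.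
  apply: derivable_sum => k.
  have -> : (fun t => (y - x0) 0 k * partial (w j) k (ga t)) =
    cst ((y - x0) 0 k) * (fun t => partial (w j) k (ga t)) by apply/funext.
  apply: derivableM; first exact: derivable_cst.
  by apply: line_diff; apply: wpd; apply: gaU.
have cont_hder : {within `[0, 1], continuous hder}.
  by apply: derivable_within_continuous => t; rewrite in_itv /=; exact: dhder.
have cHf t : 0 <= t <= 1 -> {for t, continuous Hf}.
  by move=> t01; apply: differentiable_continuous; rewrite -derivable1_diffP; exact: dHf.
have LR : derivable_oo_LRcontinuous Hf 0 1.
  split.
  - by move=> t; rewrite in_itv /= => /andP[t0 t1]; apply: dHf; rewrite ltW // ltW.
  - by apply: cvg_at_right_filter; apply: cHf; rewrite lexx ler01.
  - by apply: cvg_at_left_filter; apply: cHf; rewrite lexx ler01.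
have FTC := @continuous_FTC2 R hder Hf 0 1 ltr01 cont_hder LR.
rewrite /Rintegral FTC; last first.
  by move=> t; rewrite in_itv /= => /andP[t0 t1]; apply: Hf'; rewrite ltW // ltW.
by rewrite -EFinB /= /Hf /ga mul0r subr0 mul1r scale1r subrK.
Qed.

End Rad2.


Section Pot.
Context {R : realType} {n : nat}.

Lemma near_eq_cont (g h : 'rV[R]_n -> R) (y : 'rV[R]_n) :
  (\forall z \near y, g z = h z) -> {for y, continuous h} -> {for y, continuous g}.
Proof.
move=> gh /cvgrPdist_lt ch; apply/(@cvgrPdist_lt _ _ _ (nbhs y) (nbhs_filter y)) => eps ep.
near=> z.
rewrite (near gh z) ?(nbhs_singleton gh) //.
near: z; exact: ch.
Unshelve. all: by end_near. Qed.

Lemma potential (U : set 'rV[R]_n) (w : 'I_n -> 'rV[R]_n -> R) x0 :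
  open U -> U x0 -> (forall k, smooth_on U (w k)) ->
  (forall j k p, U p -> partial (w k) j p = partial (w j) k p) ->
  exists V : set 'rV[R]_n, [/\ open V, V x0, V `<=` U &
    exists u : 'rV[R]_n -> R, smooth_on V u /\
      forall i y, V y -> partial u i y = w i y].
Proof.
move=> oU Ux0 sw clo.
have wd k p : U p -> differentiable (w k) p by move=> Up; exact: smooth_diff (sw k) Up.
have wpd k j p : U p -> differentiable (partial (w k) j) p.
  by move=> Up; exact: smooth_diff (smooth_partial j (sw k)) Up.
have : \forall z \near x0, U z /\ (forall k, `|w k x0 - w k z| < 1) /\
    (forall k j, `|partial (w k) j x0 - partial (w k) j z| < 1).
  apply: filterI; first exact: (open_near oU Ux0).
  apply: filterI.
    apply: (@filter_forall _ _ _ (nbhs x0)) => k.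
    by move/cvgrPdist_lt: (differentiable_continuous (wd k x0 Ux0)); apply.
  apply: (@filter_forall _ _ _ (nbhs x0)) => k.
  apply: (@filter_forall _ _ _ (nbhs x0)) => j.
  by move/cvgrPdist_lt: (differentiable_continuous (wpd k j x0 Ux0)); apply.
move=> /nbhs_ballP [r /= r0 Hr].
have Ub : ball x0 r `<=` U by move=> p /Hr [].
pose M1 k := `|w k x0| + 1.
pose M2 k j := `|partial (w k) j x0| + 1.
have b1 k p : ball x0 r p -> `|w k p| <= M1 k.
  move=> /Hr [_ [/(_ k) H _]]; rewrite /M1.
  have -> : w k p = w k x0 - (w k x0 - w k p) by rewrite opprB addrC subrK.
  by apply: le_trans (ler_normB _ _) _; rewrite lerD2l ltW.
have b2 k j p : ball x0 r p -> `|partial (w k) j p| <= M2 k j.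
  move=> /Hr [_ [_ /(_ k j) H]]; rewrite /M2.
  have -> : partial (w k) j p = partial (w k) j x0 - (partial (w k) j x0 - partial (w k) j p)
    by rewrite opprB addrC subrK.
  by apply: le_trans (ler_normB _ _) _; rewrite lerD2l ltW.
have up := upot_partial r0 Ub wd wpd clo b1 b2.
exists (ball x0 r); split => //; first exact: ball_open.
  exact: ballxx.
exists (upot w x0).
have pe i y : ball x0 r y -> partial (upot w x0) i y = w i y.
  by move=> yb; have [] := up y i yb.
split => //.
have ud y : ball x0 r y -> differentiable (upot w x0) y.
  move=> yb; apply: (@CP _ _ (ball x0 r)) => //; first exact: ball_open.
    by move=> z k zb; have [] := up z k zb.
  move=> k; apply: (@near_eq_cont _ (w k)).
    by apply: filterS (open_near (ball_open x0 r) yb) => z zb; apply: pe.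
  exact: differentiable_continuous (wd k y (Ub y yb)).
move=> l y yb; case/lastP: l => [|l i]; first exact: ud.
rewrite -cats1 -iter_partial_cat /=.
have sp : smooth_on (ball x0 r) (partial (upot w x0) i).
  apply: (@smooth_on_loc _ _ U (ball x0 r) (w i)) => //; first exact: ball_open.
  by move=> z zb; rewrite pe.
exact: sp.
Qed.
End Pot.



Lemma neq_opp (R : realType) (a b : R) : a = - b -> b != 0 -> a != 0.
Proof. by move=> ->; rewrite oppr_eq0. Qed.

Unset Implicit Arguments.
Theorem mainTheorem14 (R : realType) (n : nat) (U : set 'rV[R]_n)
  (b q : 'rV[R]_n -> R) (lam mu gam : 'I_n -> 'rV[R]_n -> R) :
  open U ->
  smooth_on U b -> smooth_on U q ->
  (forall i, smooth_on U (lam i)) -> (forall i, smooth_on U (mu i)) ->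
  (forall i, smooth_on U (gam i)) ->
  (forall i x, U x -> mu i x != 0) ->
  (forall i x, U x -> partial q i x = lam i x / mu i x * partial b i x) ->
  let E := fun i j x =>
    q x * (mu j x - mu i x) + b x * (lam i x - lam j x) + gam i x - gam j x in
  (forall i j x, i != j -> U x -> E i j x != 0) ->
  let K := fun i j x =>
    (lam i x - lam j x * mu i x / mu j x) / E i j x * partial b j x in
  (forall i j x, i != j -> U x ->
     [/\ partial (lam i) j x = (lam j x - lam i x) * K i j x,
         partial (mu i) j x = (mu j x - mu i x) * K i j x,
         partial (gam i) j x = (gam j x - gam i x) * K i j x &
         partial (partial b i) j x =
           (lam i x * (1 + mu j x / mu i x) - lam j x * (1 + mu i x / mu j x))
             / E i j x * partial b i x * partial b j x]) ->
  let c := fun i x => gam i x + b x * lam i x - q x * mu i x in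
  let phi := fun i x => lam i x / mu i x in
  (forall i j x, i != j -> U x ->
     partial (c i) j x = 0 /\ E i j x = c i x - c j x) /\
  (forall x0, U x0 ->
     exists V : set 'rV[R]_n, [/\ open V, V x0, V `<=` U &
       exists u : 'rV[R]_n -> R,
         smooth_on V u /\
         (forall i y, V y -> partial u i y = mu i y * partial b i y) /\
         (forall i j y, i != j -> V y ->
            partial (phi i) j y =
              (phi j y - phi i y) ^+ 2 / (c j y - c i y) * partial u j y /\
            partial (partial u i) j y =
              2 * (phi j y - phi i y) / (c j y - c i y)
                * partial u i y * partial u j y)]).
Proof.
move=> oU sb sq sl sm sg mu0 hq E hE K hd c phi.
have DD (f : 'rV[R]_n -> R) x v : smooth_on U f -> U x -> derivable f x v.
  by move=> sf Ux; apply: diff_derivable; exact: smooth_diff sf Ux.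
split.
  move=> i j x ij Ux; split; last by rewrite /E /c; ring.
  have dg := DD _ x (delta_mx 0 j) (sg i) Ux.
  have db := DD _ x (delta_mx 0 j) sb Ux.
  have dq := DD _ x (delta_mx 0 j) sq Ux.
  have dl := DD _ x (delta_mx 0 j) (sl i) Ux.
  have dm := DD _ x (delta_mx 0 j) (sm i) Ux.
  rewrite /partial /c (derive_c dg db dl dq dm).
  have [hl hm hg _] := hd i j x ij Ux.
  have hqj := hq j x Ux.
  have mj := mu0 j x Ux.
  have Eij := hE i j x ij Ux.
  rewrite /partial in hl hm hg hqj.
  rewrite hl hm hg hqj /K.
  rewrite /E in Eij *.
  rewrite -/(partial b j x). field.
  by rewrite mj Eij.
move=> x0 Ux0.
pose w k := fun y => mu k y * partial b k y.
have sw k : smooth_on U (w k).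
  have := smooth_mul oU (sm k) (smooth_partial k sb).
  by have -> : mu k * partial b k = w k by apply/funext.
have clo : forall j k p, U p -> partial (w k) j p = partial (w j) k p.
  move=> j k p Up; case: (eqVneq j k) => [->//|jk].
  have kj : k != j by rewrite eq_sym.
  have dmk := DD _ p (delta_mx 0 j) (sm k) Up.
  have dbk := DD _ p (delta_mx 0 j) (smooth_partial k sb) Up.
  have dmj := DD _ p (delta_mx 0 k) (sm j) Up.
  have dbj := DD _ p (delta_mx 0 k) (smooth_partial j sb) Up.
  rewrite /partial /w (deriveMp dmk dbk) (deriveMp dmj dbj).
  have [_ hmk _ hbk] := hd k j p kj Up.
  have [_ hmj _ hbj] := hd j k p jk Up.
  rewrite /partial in hmk hbk hmj hbj.
  rewrite hmk hbk hmj hbj /K.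
  have mj := mu0 j p Up.
  have mk := mu0 k p Up.
  have Ekj := hE k j p kj Up.
  have Ejk := hE j k p jk Up.
  rewrite /E in Ekj Ejk *.
  rewrite -/(partial b k p) -/(partial b j p).
  field.
  by rewrite Ejk mk mj Ekj.
have [V [oV Vx0 VU [u [su pu]]]] := potential oU Ux0 sw clo.
exists V; split => //; exists u; split => //; split.
  by move=> i y Vy; rewrite pu.
move=> i j y ij Vy.
have Uy := VU y Vy.
have dli := DD _ y (delta_mx 0 j) (sl i) Uy.
have dmi := DD _ y (delta_mx 0 j) (sm i) Uy.
have dbi := DD _ y (delta_mx 0 j) (smooth_partial i sb) Uy.
have mi := mu0 i y Uy.
have mj := mu0 j y Uy.
have Eij := hE i j y ij Uy.
have [hl hm _ hb] := hd i j y ij Uy.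
have uj := pu j y Vy.
have ui := pu i y Vy.
rewrite /w in ui uj.
split.
  rewrite uj /partial /phi (derive_div mi dli dmi).
  rewrite /partial in hl hm.
  rewrite hl hm /K /c.
  rewrite -/(partial b j y).
  rewrite /E in Eij *.
  field.
  rewrite mi mj Eij !andbT; apply: (@neq_opp _ _ _ _ Eij); ring.
have -> : partial (partial u i) j y = partial (w i) j y.
  rewrite /partial; apply: near_eq_derive.
  by apply: filterS (open_near oV Vy) => z Vz; rewrite -/(partial u i z) pu.
rewrite ui uj /partial /w (deriveMp dmi dbi).
rewrite /partial in hm hb.
rewrite hm hb /K /c.
rewrite -/(partial b j y) -/(partial b i y).
rewrite /E /phi in Eij *.
field.
rewrite mi mj Eij !andbT; apply: (@neq_opp _ _ _ _ Eij); ring.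
Qed.
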